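(* Let $R$ be a hyperring. If $R/nil(R)$ has an idempotent different from its zero and identity elements, then $R$ has an idempotent $e$ with $e\notin\{0,1\}$.
   Context: Standing conventions. A hyperring means a commutative Krasner hyperring with identity: a set $R$ with a hyperoperation $+:R\times R\to\mathcal P^*(R)$ (nonempty subsets; for subsets $A,B$ one sets $A+B=\bigcup_{a\in A,b\in B}a+b$) and a binary operation $\cdot$ such that: $+$ is associative and commutative; there is $0\in R$ with $0+x=\{x\}$ for all $x$; every $x$ has a unique $-x$ with $0\in x+(-x)$; $z\in x+y$ implies $y\in -x+z$ and $x\in z-y$; $(R,\cdot)$ is a commutative monoid with identity $1$; $0\cdot x=0$; and $x(y+z)=xy+xz$. A hyperideal of $R$ is a nonempty $I\subseteq R$ with $a-b\subseteq I$ and $ra\in I$ for all $a,b\in I$, $r\in R$. $nil(R)=\{x\in R: x^n=0\text{ for some }n\in\mathbb N\}$ (a hyperideal). For a hyperideal $I$, the quotient hyperring $R/I=\{x+I:x\in R\}$ has operations $(x+I)+(y+I)=\{z+I: z\in x+y\}$ and $(x+I)(y+I)=xy+I$, zero $I$ and identity $1+I$. *)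

(* Defs.v *)
(* Commutative Krasner hyperrings with identity. *)
From Stdlib Require Import Arith.

(* A hyperaddition is encoded by its membership relation:
   hadd x y z  means  z \in x + y. *)
Record hyperring := HyperRing {
  carrier :> Type;
  hadd : carrier -> carrier -> carrier -> Prop;
  hmul : carrier -> carrier -> carrier;
  hzero : carrier;
  hone : carrier;
  hneg : carrier -> carrier;
  hadd_nonempty : forall x y, exists z, hadd x y z;
  (* associativity: (x + y) + z = x + (y + z) as sets *)
  hadd_assoc : forall x y z t,
    (exists u, hadd x y u /\ hadd u z t) <-> (exists v, hadd y z v /\ hadd x v t);
  hadd_comm : forall x y z, hadd x y z <-> hadd y x z;
  hadd_zero : forall x z, hadd hzero x z <-> z = x;
  hadd_neg : forall x, hadd x (hneg x) hzero;
  hneg_unique : forall x y, hadd x y hzero -> y = hneg x;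
  hadd_rev : forall x y z, hadd x y z -> hadd (hneg x) z y /\ hadd z (hneg y) x;
  hmul_assoc : forall x y z, hmul x (hmul y z) = hmul (hmul x y) z;
  hmul_comm : forall x y, hmul x y = hmul y x;
  hmul_one : forall x, hmul hone x = x;
  hmul_zero : forall x, hmul hzero x = hzero;
  (* x(y + z) = xy + xz as sets *)
  hmul_distr : forall x y z t,
    (exists w, hadd y z w /\ t = hmul x w) <-> hadd (hmul x y) (hmul x z) t
}.

Arguments hadd {h}. Arguments hmul {h}. Arguments hzero {h}.
Arguments hone {h}. Arguments hneg {h}.

Fixpoint hpow {R : hyperring} (x : R) (n : nat) : R :=
  match n with
  | O => hone
  | S m => hmul x (hpow x m)
  end.

Definition hyperideal {R : hyperring} (I : R -> Prop) : Prop :=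
  (exists a, I a) /\
  (forall a b z, I a -> I b -> hadd a (hneg b) z -> I z) /\
  (forall r a, I a -> I (hmul r a)).

Definition nilR (R : hyperring) : R -> Prop :=
  fun x => exists n : nat, hpow x n = hzero.

(* The coset x + I = { z | z \in x + i for some i \in I }, an element of R/I. *)
Definition coset {R : hyperring} (I : R -> Prop) (x : R) : R -> Prop :=
  fun z => exists i, I i /\ hadd x i z.

(* Equality of elements of R/I (equality of cosets as subsets of R). *)
Definition coset_eq {R : hyperring} (X Y : R -> Prop) : Prop :=
  forall z, X z <-> Y z.

(* (x+I) is an idempotent of the quotient R/I different from its zero I = 0+I
   and its identity 1+I; multiplication in R/I is (x+I)(y+I) = xy+I. *)
Definition quot_nontrivial_idempotent {R : hyperring} (I : R -> Prop) (x : R) : Prop :=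
  coset_eq (coset I (hmul x x)) (coset I x) /\
  ~ coset_eq (coset I x) (coset I hzero) /\
  ~ coset_eq (coset I x) (coset I hone).

(* Main.v *)
Require Import Defs.
From Stdlib Require Import Arith Lia.

Lemma mulr0 (R : hyperring) (x : R) : hmul x hzero = hzero.
Proof. rewrite hmul_comm. apply hmul_zero. Qed.

Lemma mulr1 (R : hyperring) (x : R) : hmul x hone = x.
Proof. rewrite hmul_comm. apply hmul_one. Qed.

Lemma hadd_0r (R : hyperring) (x : R) : hadd x hzero x.
Proof. apply hadd_comm. apply hadd_zero. reflexivity. Qed.

Lemma hadd_0r_eq (R : hyperring) (x z : R) : hadd x hzero z -> z = x.
Proof. intro H. apply hadd_comm in H. apply hadd_zero in H. exact H. Qed.

Lemma hnegK (R : hyperring) (x : R) : hneg (hneg x) = x.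
Proof.
  pose proof (hadd_neg R x) as H. apply hadd_comm in H.
  symmetry. apply hneg_unique. exact H.
Qed.

Lemma hneg0 (R : hyperring) : hneg (@hzero R) = hzero.
Proof.
  symmetry. apply hneg_unique. apply hadd_zero. reflexivity.
Qed.

Lemma distr_el (R : hyperring) (x y z w : R) :
  hadd y z w -> hadd (hmul x y) (hmul x z) (hmul x w).
Proof. intro H. apply (hmul_distr R). exists w. split; auto. Qed.

Lemma mulN (R : hyperring) (x y : R) : hmul x (hneg y) = hneg (hmul x y).
Proof.
  apply hneg_unique. rewrite <- (mulr0 R x). apply distr_el. apply hadd_neg.
Qed.

Lemma mulNl (R : hyperring) (x y : R) : hmul (hneg x) y = hneg (hmul x y).
Proof. rewrite hmul_comm, mulN, hmul_comm. reflexivity. Qed.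

Lemma hpow_add (R : hyperring) (x : R) i j :
  hpow x (i + j) = hmul (hpow x i) (hpow x j).
Proof.
  induction i; simpl. rewrite hmul_one; auto.
  rewrite IHi, hmul_assoc. reflexivity.
Qed.

Lemma hpow_mul (R : hyperring) (x y : R) n :
  hpow (hmul x y) n = hmul (hpow x n) (hpow y n).
Proof.
  induction n; simpl. rewrite hmul_one; auto.
  rewrite IHn.
  rewrite <- (hmul_assoc R x (hpow x n)).
  rewrite (hmul_assoc R (hpow x n) y (hpow y n)).
  rewrite (hmul_comm R (hpow x n) y).
  rewrite <- (hmul_assoc R y (hpow x n)).
  rewrite !hmul_assoc. reflexivity.
Qed.

Lemma hpow_one (R : hyperring) n : hpow (@hone R) n = hone.
Proof. induction n; simpl; auto. rewrite IHn. apply hmul_one. Qed.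

Lemma hpow_ge (R : hyperring) (x : R) n m :
  hpow x n = hzero -> n <= m -> hpow x m = hzero.
Proof.
  intros H Hle. replace m with (n + (m - n)) by lia.
  rewrite hpow_add, H. apply hmul_zero.
Qed.

Lemma hpow_neg (R : hyperring) (x : R) n :
  hpow (hneg x) n = hpow x n \/ hpow (hneg x) n = hneg (hpow x n).
Proof.
  induction n; simpl. left; auto.
  destruct IHn as [H|H]; rewrite H.
  - right. apply mulNl.
  - left. rewrite mulNl, mulN, hnegK. reflexivity.
Qed.

Lemma nil_neg (R : hyperring) (x : R) : nilR R x -> nilR R (hneg x).
Proof.
  intros [n Hn]. exists n. destruct (hpow_neg R x n) as [H|H]; rewrite H, ?Hn; auto.
  apply hneg0.
Qed.

Inductive Gen (R : hyperring) (S : R -> Prop) : R -> Prop :=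
| gen_base s : S s -> Gen R S s
| gen_mul r y : Gen R S y -> Gen R S (hmul r y)
| gen_add u v w : Gen R S u -> Gen R S v -> hadd u v w -> Gen R S w.

Lemma gen_mul_ext (R : hyperring) (S T : R -> Prop) (z y : R) :
  Gen R S y -> (forall s, S s -> Gen R T (hmul z s)) -> Gen R T (hmul z y).
Proof.
  intros HG HS. induction HG.
  - auto.
  - rewrite hmul_assoc, (hmul_comm R z r), <- hmul_assoc. apply gen_mul. auto.
  - eapply gen_add; [exact IHHG1|exact IHHG2|]. apply distr_el. exact H.
Qed.

Definition Tk (R : hyperring) (a b : R) (k : nat) : R -> Prop :=
  fun s => exists i j, i + j = k /\ s = hmul (hpow a i) (hpow b j).

Lemma pow_gen (R : hyperring) (a b z : R) k :
  hadd a b z -> Gen R (Tk R a b k) (hpow z k).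
Proof.
  intro Hz. induction k.
  - apply gen_base. exists 0, 0. simpl. split; auto. rewrite hmul_one; auto.
  - simpl. apply gen_mul_ext with (S := Tk R a b k); auto.
    intros s [i [j [Hij ->]]].
    pose proof (distr_el R (hmul (hpow a i) (hpow b j)) _ _ _ Hz) as H.
    rewrite (hmul_comm R _ z) in H.
    eapply gen_add; [apply gen_base|apply gen_base|exact H].
    + exists (S i), j. split. lia. simpl.
      rewrite (hmul_comm R _ a), hmul_assoc. reflexivity.
    + exists i, (S j). split. lia. simpl.
      rewrite <- hmul_assoc, (hmul_comm R _ b). reflexivity.
Qed.

Lemma gen_zero (R : hyperring) (S : R -> Prop) y :
  (forall s, S s -> s = hzero) -> Gen R S y -> y = hzero.
Proof.
  intros HS HG. induction HG; auto.
  - rewrite IHHG. apply mulr0.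
  - subst. apply hadd_zero in H. auto.
Qed.

Lemma nil_add (R : hyperring) (a b z : R) :
  nilR R a -> nilR R b -> hadd a b z -> nilR R z.
Proof.
  intros [m Hm] [n Hn] Hz. exists (m + n).
  apply (gen_zero R (Tk R a b (m + n))); [|apply pow_gen; auto].
  intros s [i [j [Hij ->]]].
  destruct (le_lt_dec m i).
  - rewrite (hpow_ge R a m i); auto. apply hmul_zero.
  - rewrite (hpow_ge R b n j); auto. apply mulr0. lia.
Qed.

Definition Qp (R : hyperring) (A B : R) (y : R) : Prop :=
  exists p q, hadd (hmul A p) (hmul B q) y.

Lemma gen_Q (R : hyperring) (S : R -> Prop) (A B y : R) :
  (forall s, S s -> Qp R A B s) -> Gen R S y -> Qp R A B y.
Proof.
  intros HS HG. induction HG; auto.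
  - destruct IHHG as [p [q H]]. exists (hmul r p), (hmul r q).
    apply distr_el with (x := r) in H.
    rewrite !hmul_assoc, (hmul_comm R r A), (hmul_comm R r B) in H.
    rewrite <- !hmul_assoc in H. exact H.
  - destruct IHHG1 as [p1 [q1 H1]]. destruct IHHG2 as [p2 [q2 H2]].
    destruct (proj1 (hadd_assoc R (hmul A p1) (hmul B q1) v w) (ex_intro _ u (conj H1 H)))
      as [v' [Hv1 Hv2]].
    apply hadd_comm in Hv1.
    destruct (proj1 (hadd_assoc R (hmul A p2) (hmul B q2) (hmul B q1) v') (ex_intro _ v (conj H2 Hv1)))
      as [s [Hs1 Hs2]].
    destruct (proj2 (hadd_assoc R (hmul A p1) (hmul A p2) s w) (ex_intro _ v' (conj Hs2 Hv2)))
      as [c [Hc1 Hc2]].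
    apply (hmul_distr R) in Hc1. destruct Hc1 as [p' [Hp' ->]].
    apply (hmul_distr R) in Hs1. destruct Hs1 as [q' [Hq' ->]].
    exists p', q'. exact Hc2.
Qed.

Lemma coset_sub (R : hyperring) (a d b : R) :
  hadd a d b -> nilR R d -> forall z, coset (nilR R) a z -> coset (nilR R) b z.
Proof.
  intros H Hd z [i [Hi Hz]].
  apply hadd_rev in H. destruct H as [_ H].
  destruct (proj1 (hadd_assoc R b (hneg d) i z) (ex_intro _ a (conj H Hz))) as [v [Hv1 Hv2]].
  exists v. split; auto. eapply nil_add; [apply nil_neg; exact Hd| exact Hi| exact Hv1].
Qed.

Lemma coset_eq_of (R : hyperring) (a d b : R) :
  hadd a d b -> nilR R d -> coset_eq (coset (nilR R) a) (coset (nilR R) b).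
Proof.
  intros H Hd z. split.
  - apply (coset_sub R a d b); auto.
  - apply (coset_sub R b (hneg d) a).
    + apply hadd_rev in H. apply H.
    + apply nil_neg; auto.
Qed.

Theorem mainTheorem6 (R : hyperring) :
  (exists x : R, quot_nontrivial_idempotent (nilR R) x) ->
  exists e : R, hmul e e = e /\ e <> hzero /\ e <> hone.
Proof.
  intros [x [Hid [Hn0 Hn1]]].
  assert (Hx : coset (nilR R) (hmul x x) x).
  { apply Hid. exists hzero. split. exists 1. simpl. apply hmul_zero. apply hadd_0r. }
  destruct Hx as [i [[N HN] Hi]].
  apply hadd_rev in Hi. destruct Hi as [Hi _]. apply hadd_comm in Hi.
  rewrite <- (mulr1 R x) in Hi at 1. rewrite <- (mulN R x x) in Hi.
  apply (hmul_distr R) in Hi. destruct Hi as [w [Hw ->]].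
  apply hadd_rev in Hw. destruct Hw as [_ Hw]. rewrite hnegK in Hw.
  apply hadd_comm in Hw.
  pose proof (pow_gen R x w hone (N + N) Hw) as HG. rewrite hpow_one in HG.
  destruct (gen_Q R (Tk R x w (N + N)) (hpow x N) (hpow w N) hone) with (2 := HG) as [p [q Hpq]].
  { intros s [i [j [Hij ->]]]. destruct (le_lt_dec N i).
    - exists (hmul (hpow x (i - N)) (hpow w j)), hzero.
      rewrite mulr0, hmul_assoc, <- hpow_add. replace (N + (i - N)) with i by lia.
      apply hadd_0r.
    - exists hzero, (hmul (hpow x i) (hpow w (j - N))).
      rewrite mulr0. apply hadd_zero.
      rewrite hmul_assoc, (hmul_comm R _ (hpow x i)), <- hmul_assoc, <- hpow_add.
      f_equal. f_equal. lia. }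
  set (e := hmul (hpow x N) p) in *. set (f := hmul (hpow w N) q) in *.
  assert (Hef : hmul e f = hzero).
  { unfold e, f. rewrite <- hmul_assoc, (hmul_assoc R p), (hmul_comm R p),
      <- hmul_assoc, hmul_assoc, <- hpow_mul, HN. apply hmul_zero. }
  exists e. split; [|split].
  - pose proof (distr_el R e _ _ _ Hpq) as H. rewrite Hef, mulr1 in H.
    symmetry. apply hadd_0r_eq. exact H.
  - intro He0. rewrite He0 in Hpq. apply hadd_zero in Hpq.
    apply Hn0. intro z. symmetry. revert z. apply coset_eq_of with (d := x).
    + apply hadd_zero. reflexivity.
    + exists N. rewrite <- (mulr1 R (hpow x N)), Hpq. unfold f.
      rewrite hmul_assoc, <- hpow_mul, HN. apply hmul_zero.
  - intro He1. apply Hn1. apply coset_eq_of with (d := w); auto.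
    exists N. rewrite <- (mulr1 R (hpow w N)), <- He1. unfold e.
    rewrite hmul_assoc, (hmul_comm R (hpow w N)), <- hpow_mul, HN. apply hmul_zero.
Qed.
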